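(* Let $\mathbb{N}$ be a strongly connected directed graph on vertices $\{1,\dots,m\}$, fix $q\in\{1,\dots,m\}$ and let $b_q$ be the $q$th unit vector of $\mathbb{R}^m$. Then there exists $G=[g_{ij}]\in\mathbb{R}^{m\times m}$ with all row sums equal to zero and with $g_{ij}=0$ whenever $j$ is not a neighbor of $i$ (i.e., whenever $j\neq i$ and there is no arc from $j$ to $i$ in $\mathbb{N}$), such that $(G,b_q)$ is a controllable pair.
   Context: In the neighbor graph, an arc from $j$ to $i$ means agent $j$ is a neighbor of agent $i$; every agent is considered a neighbor of itself. *)

(* Defs.v *)
From mathcomp Require Import all_boot all_order all_algebra.
From mathcomp Require Import reals.
Set Implicit Arguments. Unset Strict Implicit. Unset Printing Implicit Defensive.
Import Order.TTheory GRing.Theory Num.Theory.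
Local Open Scope ring_scope.

(* Directed graph on vertices 'I_m given by arc relation: [e j i] means there is
   an arc from j to i, i.e. j is a neighbor of i. *)
Definition strongly_connected (m : nat) (e : rel 'I_m) : Prop :=
  forall i j : 'I_m, connect e i j.

Definition neighbor (m : nat) (e : rel 'I_m) (i j : 'I_m) : bool :=
  (j == i) || e j i.

Definition ctrb_mx (R : comNzRingType) (m : nat) (A : 'M[R]_m) (b : 'cV[R]_m)
  : 'M[R]_(m, m) :=
  \matrix_(i < m, k < m) ((A ^+ k) *m b) i ord0.

Definition controllable_pair (R : fieldType) (m : nat) (A : 'M[R]_m) (b : 'cV[R]_m)
  : Prop := \rank (ctrb_mx A b) = m.

Definition unit_cV (R : comNzRingType) (m : nat) (q : 'I_m) : 'cV[R]_m :=
  \col_(i < m) (i == q)%:R.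

(* Main.v *)
Require Import Defs.
From mathcomp Require Import all_boot all_order all_algebra.
From mathcomp Require Import reals.
From mathcomp Require Import zify ring lra.
Import Order.TTheory GRing.Theory Num.Theory.
Local Open Scope ring_scope.


Definition dd (R : realType) {n} (q i : 'I_n.+1) : R := (i : nat)%:R - (q : nat)%:R.

Definition Gm (R : realType) {n} (q : 'I_n.+1) (p : 'I_n.+1 -> 'I_n.+1) : 'M[R]_n.+1 :=
  \matrix_(i, j) ((j == i)%:R * dd R q i - (j == p i)%:R * dd R q i).

Lemma dd_inj (R : realType) n (q a b : 'I_n.+1) : dd R q a = dd R q b -> a = b.
Proof. by move/addIr/eqP; rewrite eqr_nat => /eqP/val_inj. Qed.

Lemma dd_eq0 (R : realType) n (q a : 'I_n.+1) : (dd R q a == 0) = (a == q).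
Proof. by rewrite /dd subr_eq0 eqr_nat. Qed.

Lemma dd_q (R : realType) n (q : 'I_n.+1) : dd R q q = 0.
Proof. by rewrite /dd subrr. Qed.

Lemma coordG (R : realType) n (q : 'I_n.+1) p (y : 'rV[R]_n.+1) a :
  (y *m Gm R q p) 0 a = dd R q a * y 0 a - \sum_i (a == p i)%:R * dd R q i * y 0 i.
Proof.
rewrite mxE.
under eq_bigr do rewrite mxE mulrBr.
rewrite sumrB (bigD1 a) //= eqxx mul1r big1 ?addr0; last first.
  by move=> i; rewrite eq_sym => /negbTE ->; rewrite mul0r mulr0.
rewrite mulrC; congr (_ - _); apply: eq_bigr => i _; by rewrite mulrC.
Qed.
Lemma tree_exists n (e : rel 'I_n.+1) (q : 'I_n.+1) :
  (forall i j, connect e i j) ->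
  exists h : 'I_n.+1 -> nat, exists p : 'I_n.+1 -> 'I_n.+1,
    p q = q /\ forall z, z != q -> e (p z) z /\ (h (p z) < h z)%N.
Proof.
move=> sc.
have ex z : exists k, [exists s : k.-tuple 'I_n.+1, path e q s && (last q s == z)].
  move/connectP: (sc q z) => [s ps ->]; exists (size s); apply/existsP.
  by exists (in_tuple s); rewrite /= ps eqxx.
pose h z := ex_minn (ex z).
have hP z k : [exists s : k.-tuple 'I_n.+1, path e q s && (last q s == z)] -> (h z <= k)%N.
  by rewrite /h; case: ex_minnP => k0 _ H /H.
have hW z : exists s : (h z).-tuple 'I_n.+1, path e q s && (last q s == z).
  by rewrite /h; case: ex_minnP => k /existsP [s Hs] _; exists s.
have par z : z != q -> exists u, e u z && (h u < h z)%N.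
  move=> nz; case: (hW z) => s /andP[ps /eqP ls].
  have sz := size_tuple s.
  move: ps ls sz; case/lastP: (tval s) => [|t x]; first by move=> _ /= zq; rewrite zq eqxx in nz.
  rewrite rcons_path last_rcons size_rcons => /andP[pt ex'] xz sz.
  exists (last q t); rewrite -sz ltnS -xz ex' /=.
  by apply: hP; apply/existsP; exists (in_tuple t); rewrite /= pt eqxx.
exists h; exists (fun z => if z == q then q else odflt q [pick u | e u z && (h u < h z)%N]).
rewrite eqxx; split => // z nz; rewrite (negbTE nz).
case: pickP => [u /andP[]//|none]; case: (par z nz) => u Hu.
by rewrite none in Hu.
Qed.
Lemma annih (R : realType) n (q : 'I_n.+1) p (h : 'I_n.+1 -> nat)
  (Hp : p q = q) (Hh : forall z, z != q -> (h (p z) < h z)%N) :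
  forall (S : {set 'I_n.+1}) (x : 'rV[R]_n.+1),
  (forall z, z \in S -> p z \in S) -> (forall z, z \notin S -> x 0 z = 0) ->
  x *m horner_mx (Gm R q p) (\prod_(i in S) ('X - (dd R q i)%:P)) = 0.
Proof.
move=> S; move: {2}#|S| (leqnn #|S|) => k; elim: k S => [|k IH] S.
  move=> H0 x _ x0; have S0 : S = set0 by apply/eqP; rewrite -cards_eq0 -leqn0.
  have -> : x = 0 by apply/rowP => z; rewrite x0 ?S0 ?inE ?mxE.
  by rewrite mul0mx.
move=> Hk x Sc xS.
case: (set_0Vmem S) => [S0|[v0 v0S]].
  have -> : x = 0 by apply/rowP => z; rewrite xS ?S0 ?inE ?mxE.
  by rewrite mul0mx.
case: (arg_maxnP h v0S) => v vS vmax.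
rewrite (bigD1 v) //= rmorphM /= -mulmxE mulmxA rmorphB /= horner_mx_X horner_mx_C.
rewrite (eq_bigl (mem (S :\ v))); last by move=> i; rewrite !inE andbC.
apply: IH.
- have vS' : v \in S := vS.
  by move: Hk; rewrite (cardsD1 v S) vS'.
- move=> z; rewrite !inE => /andP[zv zS]; rewrite Sc // andbT.
  apply/eqP => pzv; case: (eqVneq z q) => [zq|nzq].
    by move: zv pzv; rewrite zq Hp => /eqP.
  by have := vmax _ zS; rewrite /= -pzv leqNgt Hh.
- move=> z zn.
  rewrite mulmxBr mul_mx_scalar mxE coordG mxE.
  rewrite big1 ?subr0; last first.
    move=> i _; case: (eqVneq (x 0 i) 0) => [->|xi0]; first by rewrite mulr0.
    have iS : i \in S by apply: contraR xi0 => /xS ->.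
    case: (eqVneq z (p i)) => [zpi|]; last by rewrite mul0r mul0r.
    case: (eqVneq i q) => [->|iq]; first by rewrite dd_q mulr0 mul0r.
    have zS : z \in S by rewrite zpi Sc.
    have zv : z = v by apply/eqP; move: zn; rewrite !inE zS andbT negbK.
    by have := vmax _ iS; rewrite /= -zv zpi leqNgt Hh.
  case: (boolP (z \in S)) => zS.
    have zv : z = v by apply/eqP; move: zn; rewrite !inE zS andbT negbK.
    by rewrite zv mxE subrr.
  by rewrite mxE xS // !mulr0 subrr.
Qed.

Lemma hornXc (R : realType) n (q : 'I_n.+1) p (x : 'rV[R]_n.+1) a (P : {poly R}) :
  x *m horner_mx (Gm R q p) (('X - (dd R q a)%:P) * P) =
  (x *m (Gm R q p - (dd R q a)%:M)) *m horner_mx (Gm R q p) P.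
Proof. by rewrite rmorphM /= -mulmxE mulmxA rmorphB /= horner_mx_X horner_mx_C. Qed.

Lemma extract (R : realType) n (q : 'I_n.+1) p :
  forall (s : seq 'I_n.+1) (x : 'rV[R]_n.+1), x != 0 ->
  x *m horner_mx (Gm R q p) (\prod_(a <- s) ('X - (dd R q a)%:P)) = 0 ->
  exists s' v, (size s' < size s)%N /\
    x *m horner_mx (Gm R q p) (\prod_(a <- s') ('X - (dd R q a)%:P)) != 0 /\
    x *m horner_mx (Gm R q p) (\prod_(a <- s') ('X - (dd R q a)%:P)) *m Gm R q p =
    dd R q v *: (x *m horner_mx (Gm R q p) (\prod_(a <- s') ('X - (dd R q a)%:P))).
Proof.
elim=> [|a s IH] x xn0.
  by rewrite big_nil rmorph1 mulmx1 => x0; rewrite x0 eqxx in xn0.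
rewrite big_cons hornXc => H.
case: (eqVneq (x *m (Gm R q p - (dd R q a)%:M)) 0) => [x0|xn].
  exists [::], a; rewrite big_nil rmorph1 mulmx1; split => //; split => //.
  by move: x0; rewrite mulmxBr mul_mx_scalar => /eqP; rewrite subr_eq0 => /eqP.
case: (IH _ xn H) => s' [v [Hs [Hn He]]].
by exists (a :: s'), v; rewrite big_cons hornXc.
Qed.

Lemma lowdeg (R : realType) n (q : 'I_n.+1) p :
  forall (s : seq 'I_n.+1) (x : 'rV[R]_n.+1),
  (forall i, (i <= size s)%N -> (x *m Gm R q p ^+ i) 0 q = 0) ->
  (x *m horner_mx (Gm R q p) (\prod_(a <- s) ('X - (dd R q a)%:P))) 0 q = 0.
Proof.
elim=> [|a s IH] x H.
  by rewrite big_nil rmorph1 mulmx1; have := H 0%N; rewrite expr0 mulmx1; apply.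
rewrite big_cons hornXc; apply: IH => i Hi.
rewrite mulmxBr mul_mx_scalar mulmxBl -scalemxAl -mulmxA mulmxE -exprS !mxE.
have H1 := H i.+1; have H2 := H i.
rewrite !mxE in H1 H2; rewrite H1 ?H2 ?mulr0 ?subr0 //.
  by apply: leq_trans Hi _.
Qed.

Lemma hle (n : nat) (q : 'I_n.+1) p (h : 'I_n.+1 -> nat)
  (Hp : p q = q) (Hh : forall z, z != q -> (h (p z) < h z)%N) :
  forall k w, (h (iter k p w) <= h w)%N.
Proof.
elim=> [//|k IH] w; rewrite iterS; apply: leq_trans (IH w).
case: (eqVneq (iter k p w) q) => [->|nq]; first by rewrite Hp.
exact: ltnW (Hh _ nq).
Qed.

Lemma periodic (n : nat) (q : 'I_n.+1) p (h : 'I_n.+1 -> nat)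
  (Hp : p q = q) (Hh : forall z, z != q -> (h (p z) < h z)%N) :
  forall k z, iter k.+1 p z = z -> z = q.
Proof.
move=> k z E; apply/eqP/negPn/negP => nz.
have := hle _ _ _ _ Hp Hh k (p z); rewrite -iterSr E => H.
by have := leq_ltn_trans H (Hh _ nz); rewrite ltnn.
Qed.

Lemma uniq_anc (n : nat) (q : 'I_n.+1) p (h : 'I_n.+1 -> nat)
  (Hp : p q = q) (Hh : forall z, z != q -> (h (p z) < h z)%N) v :
  forall k1 k2, p (iter k1 p v) = p (iter k2 p v) ->
  iter k1 p v != q -> iter k2 p v != q -> iter k1 p v = iter k2 p v.
Proof.
move=> k1 k2; wlog le : k1 k2 / (k1 <= k2)%N.
  move=> W; case: (leqP k1 k2) => [/W//|/ltnW le E n1 n2].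
  by symmetry; apply: W.
move=> E n1 n2.
case: (ltngtP k1 k2) le => // [lt _|-> //].
have [t k2E] : exists t, k2 = (t.+1 + k1)%N.
  by exists (k2 - k1).-1; rewrite prednK ?subnK ?subn_gt0 // ltnW.
subst k2; exfalso; apply: (negP n2); apply/eqP.
apply: (periodic _ _ _ _ Hp Hh t).
by rewrite iterSr -E iterD iterSr.
Qed.

Lemma eigen_q (R : realType) n (q : 'I_n.+1) p (h : 'I_n.+1 -> nat)
  (Hp : p q = q) (Hh : forall z, z != q -> (h (p z) < h z)%N)
  (v : 'I_n.+1) (y : 'rV[R]_n.+1) :
  y != 0 -> y *m Gm R q p = dd R q v *: y -> y 0 q != 0.
Proof.
move=> yn0 Ey.
have Ea a : \sum_i (a == p i)%:R * dd R q i * y 0 i = (dd R q a - dd R q v) * y 0 a.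
  have := congr1 (fun M : 'rV[R]_n.+1 => M 0 a) Ey; rewrite coordG mxE => H.
  by rewrite mulrBl -H; ring.
have child a : y 0 a != 0 -> a != v -> exists2 i, p i = a & (i != q) && (y 0 i != 0).
  move=> ya av.
  have S0 : \sum_i (a == p i)%:R * dd R q i * y 0 i != 0.
    rewrite Ea mulf_neq0 // subr_eq0; apply: contra av => /eqP/dd_inj/eqP //.
  case: (pickP [pred i | (p i == a) && (i != q) && (y 0 i != 0)]) => [i /andP[/andP[/eqP pia iq] yi]|none].
    by exists i => //; rewrite iq yi.
  exfalso; move/negP: S0; apply; apply/eqP; apply: big1 => i _.
  have := none i; rewrite /= eq_sym.
  case: (eqVneq a (p i)) => [_|]; last by rewrite !mul0r.
  case: (eqVneq i q) => [->|_]; first by rewrite dd_q mulr0 mul0r.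
  by move/negbT; rewrite negbK => /eqP ->; rewrite mulr0.
have [a0 ya0] : exists a0, y 0 a0 != 0.
  case: (pickP [pred a | y 0 a != 0]) => [a0 ya0|none]; first by exists a0.
  move/negP: yn0; case; apply/eqP/rowP => j; rewrite mxE.
  by have := none j; rewrite /= => /negbFE/eqP.
case: (@arg_maxnP _ a0 (fun a => y 0 a != 0) h ya0) => a1 ya1 max1.
have a1v : a1 = v.
  case: (eqVneq a1 v) => // av; case: (child _ ya1 av) => i pia /andP[iq yi].
  by have := max1 i yi; rewrite /= -pia leqNgt Hh.
subst a1.
have anc a : y 0 a != 0 -> exists k, iter k p v = a.
  suff H N : forall a, y 0 a != 0 -> (h v - h a <= N)%N -> exists k, iter k p v = a.
    by move=> ya; apply: (H (h v - h a)%N).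
  elim: N => [|N IH] b yb hN; (case: (eqVneq b v) => [->|bv]; first by exists 0%N);
   case: (child b yb bv) => i pib /andP[iq yi]; have hi := Hh i iq; rewrite pib in hi;
   have hiv := max1 i yi; rewrite /= in hiv.
    lia.
  case: (IH i yi _) => [|k ik]; first lia.
  by exists k.+1; rewrite iterS ik.
have step3 k : y 0 (iter k p v) != 0.
  elim: k => [//|k IH]; rewrite iterS.
  case: (eqVneq (iter k p v) q) => [cq|cn]; first by rewrite cq Hp -cq.
  have Hs : \sum_i (p (iter k p v) == p i)%:R * dd R q i * y 0 i = dd R q (iter k p v) * y 0 (iter k p v).
    rewrite (bigD1 (iter k p v)) //= eqxx mul1r big1 ?addr0 // => i ic.
    case: (eqVneq (p (iter k p v)) (p i)) => [E|]; last by rewrite !mul0r.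
    case: (eqVneq i q) => [->|iq]; first by rewrite dd_q mulr0 mul0r.
    case: (eqVneq (y 0 i) 0) => [->|yi]; first by rewrite mulr0.
    case: (anc i yi) => k' ik'.
    exfalso; move/eqP: ic; apply; rewrite -ik'.
    by apply: (uniq_anc _ _ _ _ Hp Hh); rewrite ?ik' // -E.
  move: Hs; rewrite Ea => H; apply/eqP => y0; move: H; rewrite y0 mulr0 => /eqP.
  by rewrite eq_sym mulf_eq0 dd_eq0 (negbTE cn) (negbTE IH).
apply/eqP => yq0.
have nq k : iter k p v != q.
  by apply: contraTneq (step3 k) => ->; rewrite yq0 eqxx.
have hk k : (h (iter k p v) + k <= h v)%N.
  elim: k => [|k IHk]; first by rewrite addn0.
  rewrite iterS addnS; apply: leq_trans IHk; rewrite ltn_add2r; exact: Hh (nq k).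
by have := hk (h v).+1; lia.
Qed.

Theorem lemma2 (R : realType) (m : nat) (e : rel 'I_m) (q : 'I_m) :
  strongly_connected e ->
  exists G : 'M[R]_m,
    (forall i : 'I_m, \sum_(j < m) G i j = 0) /\
    (forall i j : 'I_m, ~~ neighbor e i j -> G i j = 0) /\
    controllable_pair G (unit_cV R q).
Proof.
case: m e q => [|n] e q sc; first by case: q.
case: (tree_exists _ _ q sc) => h [p [Hp Hpz]].
have Hh : forall z, z != q -> (h (p z) < h z)%N by move=> z /Hpz [].
exists (Gm R q p); split; [|split].
- move=> i; under eq_bigr do rewrite mxE.
  rewrite sumrB (bigD1 i) //= eqxx big1 ?addr0; last first.
    by move=> j /negbTE ->; rewrite mul0r.
  rewrite (bigD1 (p i)) //= eqxx big1 ?addr0 ?subrr //.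
  by move=> j /negbTE ->; rewrite mul0r.
- move=> i j; rewrite /neighbor negb_or => /andP[ji eji].
  rewrite mxE (negbTE ji) mul0r sub0r.
  case: (eqVneq j (p i)) => [jp|]; last by rewrite mul0r oppr0.
  case: (eqVneq i q) => [->|iq]; first by rewrite dd_q mulr0 oppr0.
  by case: (Hpz i iq) => E _; rewrite jp E in eji.
- rewrite /controllable_pair; apply/eqP.
  change (row_free (ctrb_mx (Gm R q p) (unit_cV R q))).
  rewrite row_free_unit unitmxE unitfE; apply/negP => /det0P [w wn0 wA].
  have Hw k : (k < n.+1)%N -> (w *m Gm R q p ^+ k) 0 q = 0.
    move=> kl; have := congr1 (fun M : 'rV[R]_n.+1 => M 0 (Ordinal kl)) wA.
    rewrite !mxE => H; rewrite -[RHS]H; apply: eq_bigr => i _; rewrite !mxE; congr (_ * _).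
    rewrite (bigD1 q) //= mxE eqxx mulr1 big1 ?addr0 // => j jq.
    by rewrite mxE (negbTE jq) mulr0.
  have A0 := annih _ _ _ _ _ Hp Hh [set: 'I_n.+1] w
     (fun z _ => in_setT (p z)) (fun z zn => False_ind _ (negP zn (in_setT z))).
  rewrite -big_enum in A0.
  case: (extract _ _ _ _ _ _ wn0 A0) => s' [v [Hs [Hn He]]].
  have := eigen_q _ _ _ _ _ Hp Hh _ _ Hn He.
  rewrite lowdeg ?eqxx // => i hi; apply: Hw.
  move: Hs; rewrite -cardE cardsT card_ord => Hs; lia.
Qed.
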